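(* For every $\lambda\mu\mathrm{T}$-term $t$: if $t\in\mathrm{SN}_A$, then $t\in\mathrm{SN}_{AB}$.
   Context: The calculus $\lambda\mu\mathrm{T}$ (raw terms). Types: $\rho,\sigma,\tau ::= \mathbb{N} \mid \sigma\to\tau$. Over infinite sets of $\lambda$-variables $x,y,\dots$ and $\mu$-variables $\alpha,\beta,\gamma,\dots$, terms and commands are mutually defined by $t,r,s ::= x \mid \lambda x{:}\rho.r \mid t\,s \mid \mu\alpha{:}\rho.c \mid 0 \mid \mathsf{S}\,t \mid \mathsf{nrec}_\rho\ r\ s\ t$ and $c ::= [\alpha]t$. Terms are considered modulo renaming of bound variables; $FCV(t)$ = free $\mu$-variables; $t[x:=r]$ is capture-avoiding substitution. Numerals: $\underline{n} := \mathsf{S}^n 0$. Contexts: $E ::= \Box \mid E\,t \mid \mathsf{S}\,E \mid \mathsf{nrec}\ r\ s\ E$; $E[u]$ fills the hole with $u$. Structural substitution $t[\alpha:=\beta E]$ is homomorphic on all constructs (capture-avoiding) except $([\alpha]u)[\alpha:=\beta E] := [\beta]E[u[\alpha:=\beta E]]$ (and $([\gamma]u)[\alpha:=\beta E]:=[\gamma](u[\alpha:=\beta E])$ for $\gamma\neq\alpha$). $\to_A$ is the compatible closure (on terms and commands) of: $(\lambda x.t)r\to t[x:=r]$; $\mathsf{S}(\mu\alpha.c)\to\mu\alpha.c[\alpha:=\alpha(\mathsf{S}\,\Box)]$; $(\mu\alpha.c)s\to\mu\alpha.c[\alpha:=\alpha(\Box\,s)]$; $\mathsf{nrec}\ r\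 s\ 0\to r$; $\mathsf{nrec}\ r\ s\ (\mathsf{S}\,\underline{n})\to s\ \underline{n}\ (\mathsf{nrec}\ r\ s\ \underline{n})$; $\mathsf{nrec}\ r\ s\ (\mu\alpha.c)\to\mu\alpha.c[\alpha:=\alpha(\mathsf{nrec}\ r\ s\ \Box)]$. $\to_B$ is the compatible closure of $\mu\alpha.[\alpha]t\to t$ (if $\alpha\notin FCV(t)$) and $[\alpha]\mu\beta.c\to c[\beta:=\alpha\,\Box]$. $\to_{AB}:=\to_A\cup\to_B$. For $X\in\{A,AB\}$, $\mathrm{SN}_X$ is defined inductively: $t\in\mathrm{SN}_X$ whenever every $t'$ with $t\to_X t'$ is in $\mathrm{SN}_X$. *)

(* Defs.v *)
(* Raw terms of lambda-mu-T, locally nameless via de Bruijn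
   indices (two separate index spaces: lambda-variables and mu-variables),
   so terms are automatically taken modulo renaming of bound variables. *)
From Stdlib Require Import Arith.

Inductive ty : Type :=
| TN : ty
| TArr : ty -> ty -> ty.

Inductive term : Type :=
| Var : nat -> term
| Lam : ty -> term -> term
| App : term -> term -> term
| Mu : ty -> cmd -> term
| Zero : term
| Suc : term -> term
| Nrec : ty -> term -> term -> term -> term
with cmd : Type :=
| Cmd : nat -> term -> cmd.            (* [alpha] t, alpha a mu-variable *)

Fixpoint numeral (n : nat) : term :=
  match n with 0 => Zero | S n => Suc (numeral n) end.

(* codomain of an arrow type (used to annotate the result of the
   (mu alpha.c) s rule; irrelevant for well-typed terms) *)
Definition cod (r : ty) : ty := match r with TArr _ t => t | TN => TN end.

Fixpoint lift_lam (k : nat) (t : term) : term :=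
  match t with
  | Var x => Var (if x <? k then x else S x)
  | Lam r u => Lam r (lift_lam (S k) u)
  | App u v => App (lift_lam k u) (lift_lam k v)
  | Mu r c => Mu r (lift_lam_c k c)
  | Zero => Zero
  | Suc u => Suc (lift_lam k u)
  | Nrec r a b u => Nrec r (lift_lam k a) (lift_lam k b) (lift_lam k u)
  end
with lift_lam_c (k : nat) (c : cmd) : cmd :=
  match c with Cmd a u => Cmd a (lift_lam k u) end.

Fixpoint lift_mu (k : nat) (t : term) : term :=
  match t with
  | Var x => Var x
  | Lam r u => Lam r (lift_mu k u)
  | App u v => App (lift_mu k u) (lift_mu k v)
  | Mu r c => Mu r (lift_mu_c (S k) c)
  | Zero => Zero
  | Suc u => Suc (lift_mu k u)
  | Nrec r a b u => Nrec r (lift_mu k a) (lift_mu k b) (lift_mu k u)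
  end
with lift_mu_c (k : nat) (c : cmd) : cmd :=
  match c with Cmd a u => Cmd (if a <? k then a else S a) (lift_mu k u) end.

(* capture-avoiding substitution t[x_k := r] (x_k removed, higher indices
   decremented) *)
Fixpoint subst (k : nat) (r : term) (t : term) : term :=
  match t with
  | Var x => if x =? k then r else if k <? x then Var (pred x) else Var x
  | Lam p u => Lam p (subst (S k) (lift_lam 0 r) u)
  | App u v => App (subst k r u) (subst k r v)
  | Mu p c => Mu p (subst_c k (lift_mu 0 r) c)
  | Zero => Zero
  | Suc u => Suc (subst k r u)
  | Nrec p a b u => Nrec p (subst k r a) (subst k r b) (subst k r u)
  end
with subst_c (k : nat) (r : term) (c : cmd) : cmd :=
  match c with Cmd a u => Cmd a (subst k r u) end.

Fixpoint mfree (k : nat) (t : term) : bool :=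
  match t with
  | Var _ => false
  | Lam _ u => mfree k u
  | App u v => mfree k u || mfree k v
  | Mu _ c => mfree_c (S k) c
  | Zero => false
  | Suc u => mfree k u
  | Nrec _ a b u => mfree k a || mfree k b || mfree k u
  end
with mfree_c (k : nat) (c : cmd) : bool :=
  match c with Cmd a u => (a =? k) || mfree k u end.

Inductive ctx : Type :=
| Hole : ctx
| CApp : ctx -> term -> ctx
| CSuc : ctx -> ctx
| CNrec : ty -> term -> term -> ctx -> ctx.

Fixpoint plug (E : ctx) (u : term) : term :=
  match E with
  | Hole => u
  | CApp E t => App (plug E u) t
  | CSuc E => Suc (plug E u)
  | CNrec r a b E => Nrec r a b (plug E u)
  end.

Fixpoint lift_lam_ctx (k : nat) (E : ctx) : ctx :=
  match E with
  | Hole => Hole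
  | CApp E t => CApp (lift_lam_ctx k E) (lift_lam k t)
  | CSuc E => CSuc (lift_lam_ctx k E)
  | CNrec r a b E => CNrec r (lift_lam k a) (lift_lam k b) (lift_lam_ctx k E)
  end.

Fixpoint lift_mu_ctx (k : nat) (E : ctx) : ctx :=
  match E with
  | Hole => Hole
  | CApp E t => CApp (lift_mu_ctx k E) (lift_mu k t)
  | CSuc E => CSuc (lift_mu_ctx k E)
  | CNrec r a b E => CNrec r (lift_mu k a) (lift_mu k b) (lift_mu_ctx k E)
  end.

(* Parallel structural substitution: sigma maps each free mu-variable i to
   a pair (j, E), meaning [i]u is replaced by [j] E[u'] (u' the
   substituted u).  t[alpha := beta E] is the instance sending alpha to
   (beta, E) and every other mu-variable gamma to (gamma, Hole). *)
Definition msig := nat -> nat * ctx.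

Definition up_lam (s : msig) : msig :=
  fun i => let (j, E) := s i in (j, lift_lam_ctx 0 E).

Definition up_mu (s : msig) : msig :=
  fun i => match i with
           | 0 => (0, Hole)
           | S i' => let (j, E) := s i' in (S j, lift_mu_ctx 0 E)
           end.

Fixpoint msub (s : msig) (t : term) : term :=
  match t with
  | Var x => Var x
  | Lam r u => Lam r (msub (up_lam s) u)
  | App u v => App (msub s u) (msub s v)
  | Mu r c => Mu r (msub_c (up_mu s) c)
  | Zero => Zero
  | Suc u => Suc (msub s u)
  | Nrec r a b u => Nrec r (msub s a) (msub s b) (msub s u)
  end
with msub_c (s : msig) (c : cmd) : cmd :=
  match c with Cmd a u => let (b, E) := s a in Cmd b (plug E (msub s u)) end.

(* c[alpha := alpha E] where alpha is the mu-variable bound just outside c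
   (index 0); E is given in the scope inside the binder *)
Definition sig_self (E : ctx) : msig :=
  fun i => match i with 0 => (0, E) | S i' => (S i', Hole) end.

(* c[beta := alpha []] where beta = index 0 is removed and alpha is a
   mu-variable of the outer scope *)
Definition sig_rename (a : nat) : msig :=
  fun i => match i with 0 => (a, Hole) | S i' => (i', Hole) end.

Inductive step (R : term -> term -> Prop) (Rc : cmd -> cmd -> Prop)
  : term -> term -> Prop :=
| st_base : forall t t', R t t' -> step R Rc t t'
| st_lam : forall r u u', step R Rc u u' -> step R Rc (Lam r u) (Lam r u')
| st_appl : forall u u' v, step R Rc u u' -> step R Rc (App u v) (App u' v)
| st_appr : forall u v v', step R Rc v v' -> step R Rc (App u v) (App u v')
| st_mu : forall r c c', cstep R Rc c c' -> step R Rc (Mu r c) (Mu r c')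
| st_suc : forall u u', step R Rc u u' -> step R Rc (Suc u) (Suc u')
| st_nrec1 : forall r a a' b u, step R Rc a a' ->
    step R Rc (Nrec r a b u) (Nrec r a' b u)
| st_nrec2 : forall r a b b' u, step R Rc b b' ->
    step R Rc (Nrec r a b u) (Nrec r a b' u)
| st_nrec3 : forall r a b u u', step R Rc u u' ->
    step R Rc (Nrec r a b u) (Nrec r a b u')
with cstep (R : term -> term -> Prop) (Rc : cmd -> cmd -> Prop)
  : cmd -> cmd -> Prop :=
| cst_base : forall c c', Rc c c' -> cstep R Rc c c'
| cst_cmd : forall a u u', step R Rc u u' -> cstep R Rc (Cmd a u) (Cmd a u').

Inductive ruleA : term -> term -> Prop :=
| rA_beta : forall r t s, ruleA (App (Lam r t) s) (subst 0 s t)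
| rA_suc_mu : forall r c,
    ruleA (Suc (Mu r c)) (Mu r (msub_c (sig_self (CSuc Hole)) c))
| rA_app_mu : forall r c s,
    ruleA (App (Mu r c) s)
          (Mu (cod r) (msub_c (sig_self (CApp Hole (lift_mu 0 s))) c))
| rA_nrec_0 : forall p r s, ruleA (Nrec p r s Zero) r
| rA_nrec_S : forall p r s n,
    ruleA (Nrec p r s (Suc (numeral n)))
          (App (App s (numeral n)) (Nrec p r s (numeral n)))
| rA_nrec_mu : forall p r s q c,
    ruleA (Nrec p r s (Mu q c))
          (Mu p (msub_c (sig_self (CNrec p (lift_mu 0 r) (lift_mu 0 s) Hole)) c)).

Inductive ruleA_c : cmd -> cmd -> Prop := .

Inductive ruleB : term -> term -> Prop :=
| rB_eta : forall r t, mfree 0 t = false ->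
    ruleB (Mu r (Cmd 0 t)) (msub (sig_rename 0) t).

Inductive ruleB_c : cmd -> cmd -> Prop :=
| rB_mumu : forall a r c, ruleB_c (Cmd a (Mu r c)) (msub_c (sig_rename a) c).

Definition redA : term -> term -> Prop := step ruleA ruleA_c.
Definition redB : term -> term -> Prop := step ruleB ruleB_c.
Definition redAB (t t' : term) : Prop := redA t t' \/ redB t t'.

Inductive SN (red : term -> term -> Prop) : term -> Prop :=
| SN_intro : forall t, (forall t', red t t' -> SN red t') -> SN red t.

(* Main.v *)
Require Import Defs.
From Stdlib Require Import Arith Lia FunctionalExtensionality.

Lemma term_ind' (P : term -> Prop)
  (HV : forall x, P (Var x))
  (HL : forall r u, P u -> P (Lam r u))
  (HA : forall u v, P u -> P v -> P (App u v))
  (HM : forall r a u, P u -> P (Mu r (Cmd a u)))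
  (HZ : P Zero)
  (HS : forall u, P u -> P (Suc u))
  (HN : forall r a b u, P a -> P b -> P u -> P (Nrec r a b u)) :
  forall t, P t.
Proof.
  fix IH 1. intros [x|r u|u v|r [a u]| |u|r a b u].
  - apply HV.
  - apply HL, IH.
  - apply HA; apply IH.
  - apply HM, IH.
  - apply HZ.
  - apply HS, IH.
  - apply HN; apply IH.
Qed.

Definition rn (f : nat -> nat) : msig := fun i => (f i, Hole).
Arguments rn f i /.

Definition upf (f : nat -> nat) : nat -> nat :=
  fun i => match i with 0 => 0 | S i => S (f i) end.

Fixpoint msub_ctx (s : msig) (E : ctx) : ctx :=
  match E with
  | Hole => Hole
  | CApp E t => CApp (msub_ctx s E) (msub s t)
  | CSuc E => CSuc (msub_ctx s E)
  | CNrec r a b E => CNrec r (msub s a) (msub s b) (msub_ctx s E)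
  end.

Fixpoint ctx_comp (F G : ctx) : ctx :=
  match F with
  | Hole => G
  | CApp F t => CApp (ctx_comp F G) t
  | CSuc F => CSuc (ctx_comp F G)
  | CNrec r a b F => CNrec r a b (ctx_comp F G)
  end.

Definition comp (s t : msig) : msig :=
  fun i => let (j, E) := t i in let (k, F) := s j in (k, ctx_comp F (msub_ctx s E)).

Lemma up_mu_rn f : up_mu (rn f) = rn (upf f).
Proof. apply functional_extensionality; intros [|i]; reflexivity. Qed.
Lemma up_lam_rn f : up_lam (rn f) = rn f.
Proof. apply functional_extensionality; intros i; reflexivity. Qed.

Lemma ctx_comp_Hole E : ctx_comp E Hole = E.
Proof. induction E; simpl; congruence. Qed.

Lemma plug_comp F G u : plug (ctx_comp F G) u = plug F (plug G u).
Proof. induction F; simpl; congruence. Qed.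

Lemma msub_plug s E u : msub s (plug E u) = plug (msub_ctx s E) (msub s u).
Proof. induction E; simpl; congruence. Qed.

Lemma msub_id t : msub (rn (fun i => i)) t = t.
Proof.
  induction t using term_ind'; simpl; try rewrite up_lam_rn; try rewrite up_mu_rn;
  try congruence.
  replace (upf (fun i => i)) with (fun i : nat => i) by
    (apply functional_extensionality; intros [|]; reflexivity).
  simpl. congruence.
Qed.

Lemma msub_rn_r t : forall s f, msub s (msub (rn f) t) = msub (fun i => s (f i)) t.
Proof.
  induction t using term_ind'; intros s f; simpl; try (f_equal; eauto; fail).
  - rewrite up_lam_rn, IHt. reflexivity.
  - rewrite up_mu_rn. simpl.
    assert (E : (fun i => up_mu s (upf f i)) = up_mu (fun i => s (f i)))
      by (apply functional_extensionality; intros [|]; reflexivity).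
    rewrite IHt, E.
    change (up_mu s (upf f a)) with ((fun i => up_mu s (upf f i)) a). rewrite E.
    reflexivity.
Qed.

Definition liftf (k : nat) : nat -> nat := fun i => if i <? k then i else S i.

Lemma lift_mu_rn t : forall k, lift_mu k t = msub (rn (liftf k)) t.
Proof.
  induction t using term_ind'; intros k; simpl; try (f_equal; eauto; fail).
  - rewrite up_mu_rn. simpl. rewrite IHt.
    replace (upf (liftf k)) with (liftf (S k)). reflexivity.
    apply functional_extensionality; intros [|i]; unfold liftf, upf; simpl; auto.
    destruct (Nat.ltb_spec i k), (Nat.ltb_spec (S i) (S k)); lia.
Qed.

Lemma lift0 t : lift_mu 0 t = msub (rn S) t.
Proof. rewrite lift_mu_rn. f_equal. Qed.

Lemma lift_mu_ctx_rn E k : lift_mu_ctx k E = msub_ctx (rn (liftf k)) E.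
Proof. induction E; simpl; rewrite ?lift_mu_rn; congruence. Qed.

Lemma lift0_ctx E : lift_mu_ctx 0 E = msub_ctx (rn S) E.
Proof. rewrite lift_mu_ctx_rn. f_equal. Qed.

Lemma L2 t : forall k j, lift_lam k (lift_mu j t) = lift_mu j (lift_lam k t).
Proof. induction t using term_ind'; intros; simpl; f_equal; auto. f_equal; auto. Qed.

Lemma L2ctx E k j : lift_lam_ctx k (lift_mu_ctx j E) = lift_mu_ctx j (lift_lam_ctx k E).
Proof. induction E; simpl; rewrite ?L2; congruence. Qed.

Lemma L1 t : forall j k, j <= k -> lift_lam (S k) (lift_lam j t) = lift_lam j (lift_lam k t).
Proof.
  induction t using term_ind'; intros j k Hjk; simpl; try (f_equal; eauto; fail).
  - f_equal. destruct (Nat.ltb_spec x j), (Nat.ltb_spec x k); simpl;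
    repeat match goal with |- context [?a <? ?b] => destruct (Nat.ltb_spec a b) end; lia.
  - f_equal. apply IHt. lia.
  - f_equal. f_equal. auto.
Qed.

Lemma L1ctx E j k : j <= k -> lift_lam_ctx (S k) (lift_lam_ctx j E) = lift_lam_ctx j (lift_lam_ctx k E).
Proof. intros H; induction E; simpl; rewrite ?L1 by exact H; congruence. Qed.

Lemma lift_lam_plug k E u : lift_lam k (plug E u) = plug (lift_lam_ctx k E) (lift_lam k u).
Proof. induction E; simpl; congruence. Qed.

Definition lamlift (k : nat) (s : msig) : msig :=
  fun i => let (j, E) := s i in (j, lift_lam_ctx k E).

Lemma lamlift_rn k f : lamlift k (rn f) = rn f.
Proof. reflexivity. Qed.

Lemma LL t : forall s k, msub (lamlift k s) (lift_lam k t) = lift_lam k (msub s t).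
Proof.
  induction t using term_ind'; intros s k; simpl; try (f_equal; eauto; fail).
  - f_equal. rewrite <- IHt. f_equal.
    apply functional_extensionality; intros i; unfold lamlift, up_lam.
    destruct (s i). rewrite L1ctx by lia. reflexivity.
  - f_equal.
    assert (E : up_mu (lamlift k s) = lamlift k (up_mu s)).
    { apply functional_extensionality; intros [|i]; unfold lamlift, up_mu; simpl; auto.
      destruct (s i). rewrite L2ctx. reflexivity. }
    rewrite E. unfold lamlift at 1. destruct (up_mu s a) as [b F].
    simpl. rewrite IHt, lift_lam_plug. reflexivity.
Qed.

Lemma LLrn t f k : msub (rn f) (lift_lam k t) = lift_lam k (msub (rn f) t).
Proof. rewrite <- (lamlift_rn k f) at 1. apply LL. Qed.

Lemma LLctx E s k : msub_ctx (lamlift k s) (lift_lam_ctx k E) = lift_lam_ctx k (msub_ctx s E).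
Proof. induction E; simpl; rewrite ?LL; congruence. Qed.

Definition renl (f : nat -> nat) (s : msig) : msig :=
  fun i => let (j, E) := s i in (f j, msub_ctx (rn f) E).

Lemma upf_lift x f : msub (rn (upf f)) (lift_mu 0 x) = lift_mu 0 (msub (rn f) x).
Proof. rewrite !lift0, !msub_rn_r. reflexivity. Qed.

Lemma upf_lift_ctx E f : msub_ctx (rn (upf f)) (lift_mu_ctx 0 E) = lift_mu_ctx 0 (msub_ctx (rn f) E).
Proof. induction E; simpl; rewrite ?upf_lift; congruence. Qed.

Lemma LLrn_ctx E f : msub_ctx (rn f) (lift_lam_ctx 0 E) = lift_lam_ctx 0 (msub_ctx (rn f) E).
Proof. induction E; simpl; rewrite ?LLrn; congruence. Qed.

Lemma UPR f s : up_mu (renl f s) = renl (upf f) (up_mu s).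
Proof.
  apply functional_extensionality; intros [|i]; unfold renl, up_mu; simpl; auto.
  destruct (s i). rewrite upf_lift_ctx. reflexivity.
Qed.

Lemma UPRl f s : up_lam (renl f s) = renl f (up_lam s).
Proof.
  apply functional_extensionality; intros i; unfold renl, up_lam.
  destruct (s i). rewrite LLrn_ctx. reflexivity.
Qed.

Lemma msub_rn_l t : forall s f, msub (rn f) (msub s t) = msub (renl f s) t.
Proof.
  induction t using term_ind'; intros s f; simpl; try (f_equal; eauto; fail).
  - rewrite up_lam_rn, IHt, UPRl. reflexivity.
  - rewrite up_mu_rn, UPR. destruct (up_mu s a) as [b E] eqn:Ha. simpl.
    rewrite msub_plug, IHt. unfold renl at 2. rewrite Ha. reflexivity.
Qed.

Lemma UPL x s : msub (up_mu s) (lift_mu 0 x) = lift_mu 0 (msub s x).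
Proof.
  rewrite !lift0, msub_rn_r, msub_rn_l. f_equal.
  apply functional_extensionality; intros i; unfold renl, up_mu.
  destruct (s i). rewrite lift0_ctx. reflexivity.
Qed.

Lemma UPL_ctx E s : msub_ctx (up_mu s) (lift_mu_ctx 0 E) = lift_mu_ctx 0 (msub_ctx s E).
Proof. induction E; simpl; rewrite ?UPL; congruence. Qed.

Lemma lamlift0 s : lamlift 0 s = up_lam s.
Proof. reflexivity. Qed.

Lemma ULL x s : msub (up_lam s) (lift_lam 0 x) = lift_lam 0 (msub s x).
Proof. rewrite <- lamlift0. apply LL. Qed.

Lemma ULL_ctx E s : msub_ctx (up_lam s) (lift_lam_ctx 0 E) = lift_lam_ctx 0 (msub_ctx s E).
Proof. induction E; simpl; rewrite ?ULL; congruence. Qed.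

Lemma lift_lam_ctx_comp k F G : lift_lam_ctx k (ctx_comp F G) = ctx_comp (lift_lam_ctx k F) (lift_lam_ctx k G).
Proof. induction F; simpl; congruence. Qed.
Lemma lift_mu_ctx_comp k F G : lift_mu_ctx k (ctx_comp F G) = ctx_comp (lift_mu_ctx k F) (lift_mu_ctx k G).
Proof. induction F; simpl; congruence. Qed.
Lemma msub_ctx_comp s F G : msub_ctx s (ctx_comp F G) = ctx_comp (msub_ctx s F) (msub_ctx s G).
Proof. induction F; simpl; congruence. Qed.

Lemma UPCl s t : up_lam (comp s t) = comp (up_lam s) (up_lam t).
Proof.
  apply functional_extensionality; intros i; unfold comp, up_lam.
  destruct (t i) as [j E]; destruct (s j) as [k F].
  rewrite lift_lam_ctx_comp, <- ULL_ctx. reflexivity.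
Qed.

Lemma UPC s t : up_mu (comp s t) = comp (up_mu s) (up_mu t).
Proof.
  apply functional_extensionality; intros [|i]; unfold comp; simpl; auto.
  destruct (t i) as [j E]; simpl; destruct (s j) as [k F]; simpl.
  rewrite lift_mu_ctx_comp, UPL_ctx. reflexivity.
Qed.

Lemma msub_comp x : forall s t, msub s (msub t x) = msub (comp s t) x.
Proof.
  induction x using term_ind'; intros s t; simpl; try (f_equal; eauto; fail).
  - rewrite IHx, UPCl. reflexivity.
  - rewrite UPC. unfold comp at 1.
    remember (up_mu t a) as p eqn:Ht. destruct p as [j E]. simpl.
    remember (up_mu s j) as q eqn:Hs. destruct q as [k F].
    rewrite msub_plug, IHx, <- plug_comp. reflexivity.
Qed.

Lemma msub_comp_c c s t : msub_c s (msub_c t c) = msub_c (comp s t) c.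
Proof.
  destruct c as [a u]. simpl. unfold comp at 1. destruct (t a) as [j E]. simpl.
  destruct (s j) as [k F]. rewrite msub_plug, msub_comp, plug_comp. reflexivity.
Qed.

Lemma msub_c_ext c s t : s = t -> msub_c s c = msub_c t c.
Proof. intros; subst; reflexivity. Qed.

Lemma FE t : forall s u, (forall i, mfree i t = true -> s i = u i) -> msub s t = msub u t.
Proof.
  induction t using term_ind'; intros s u H; simpl in *; auto.
  - f_equal. apply IHt. intros i Hi. unfold up_lam. rewrite H by auto. reflexivity.
  - f_equal; [apply IHt1|apply IHt2]; intros i Hi; apply H; rewrite Hi; auto with bool.
  - assert (Hup : forall i, mfree i t = true -> up_mu s i = up_mu u i).
    { intros [|i] Hi; simpl; auto. rewrite H; auto. rewrite Hi. auto with bool. }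
    assert (Ha : up_mu s a = up_mu u a).
    { destruct a as [|a]; simpl; auto. rewrite H; auto. rewrite Nat.eqb_refl. auto. }
    rewrite Ha. destruct (up_mu u a). rewrite (IHt _ _ Hup). reflexivity.
  - f_equal; auto.
  - f_equal; [apply IHt1|apply IHt2|apply IHt3]; intros i Hi; apply H; rewrite Hi;
      auto with bool; rewrite Bool.orb_true_r; auto.
Qed.

Definition renf (a : nat) : nat -> nat := fun i => match i with 0 => a | S i => i end.

Lemma sig_rename_rn a : sig_rename a = rn (renf a).
Proof. apply functional_extensionality; intros [|]; reflexivity. Qed.

Lemma mfree_lift t : forall k, mfree k (lift_mu k t) = false.
Proof.
  induction t using term_ind'; intros k; simpl; auto;
    rewrite ?IHt, ?IHt1, ?IHt2, ?IHt3; auto.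
  rewrite Bool.orb_false_r. destruct (Nat.ltb_spec a (S k)); apply Nat.eqb_neq; lia.
Qed.

Lemma rename_lift x a : msub (sig_rename a) (lift_mu 0 x) = x.
Proof.
  rewrite sig_rename_rn, lift0, msub_rn_r. apply msub_id.
Qed.

Lemma eta_char u : mfree 0 u = false -> u = lift_mu 0 (msub (sig_rename 0) u).
Proof.
  intros H. rewrite sig_rename_rn, lift0, msub_rn_l.
  rewrite <- (msub_id u) at 1. apply FE. intros [|i] Hi. congruence. reflexivity.
Qed.

Lemma eta_intro r x : ruleB (Mu r (Cmd 0 (lift_mu 0 x))) x.
Proof.
  pose proof (rB_eta r (lift_mu 0 x) (mfree_lift x 0)) as H.
  rewrite rename_lift in H. exact H.
Qed.

Lemma eta_inv t t' : ruleB t t' -> exists r x, t = Mu r (Cmd 0 (lift_mu 0 x)) /\ t' = x.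
Proof.
  intros H. destruct H as [r u Hf]. exists r, (msub (sig_rename 0) u).
  split; auto. rewrite <- eta_char; auto.
Qed.

Lemma msub_numeral s n : msub s (numeral n) = numeral n.
Proof. induction n; simpl; congruence. Qed.
Lemma lift_mu_numeral k n : lift_mu k (numeral n) = numeral n.
Proof. induction n; simpl; congruence. Qed.
Lemma lift_lam_numeral k n : lift_lam k (numeral n) = numeral n.
Proof. induction n; simpl; congruence. Qed.
Lemma subst_numeral k r n : subst k r (numeral n) = numeral n.
Proof. induction n; simpl; congruence. Qed.

Lemma msub_rn_numeral f x n : msub (rn f) x = numeral n -> x = numeral n.
Proof.
  revert x; induction n; intros x H; destruct x; simpl in H; try discriminate; auto.
  injection H; intros; simpl; f_equal; auto.
Qed.

Lemma MS t : forall f k r, msub (rn f) (subst k r t) = subst k (msub (rn f) r) (msub (rn f) t).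
Proof.
  induction t using term_ind'; intros f k r0; simpl; try (f_equal; eauto; fail).
  - destruct (x =? k); auto. destruct (k <? x); auto.
  - rewrite up_lam_rn, IHt, LLrn. reflexivity.
  - rewrite up_mu_rn. simpl. rewrite IHt, upf_lift. reflexivity.
Qed.

Fixpoint size (t : term) : nat :=
  match t with
  | Var _ => 1
  | Lam _ u => S (size u)
  | App u v => S (size u + size v)
  | Mu _ (Cmd _ u) => S (S (size u))
  | Zero => 1
  | Suc u => S (size u)
  | Nrec _ a b u => S (size a + size b + size u)
  end.

Lemma size_rn t : forall f, size (msub (rn f) t) = size t.
Proof.
  induction t using term_ind'; intros f; simpl; rewrite ?up_lam_rn, ?up_mu_rn; simpl; auto.
Qed.

Scheme step_min := Minimality for step Sort Prop
  with cstep_min := Minimality for cstep Sort Prop.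

Lemma step_ind' (R : term -> term -> Prop) (Rc : cmd -> cmd -> Prop)
  (P : term -> term -> Prop)
  (Hb : forall t t', R t t' -> P t t')
  (Hl : forall r u u', step R Rc u u' -> P u u' -> P (Lam r u) (Lam r u'))
  (Hal : forall u u' v, step R Rc u u' -> P u u' -> P (App u v) (App u' v))
  (Har : forall u v v', step R Rc v v' -> P v v' -> P (App u v) (App u v'))
  (Hmb : forall r a u c', Rc (Cmd a u) c' -> P (Mu r (Cmd a u)) (Mu r c'))
  (Hmc : forall r a u u', step R Rc u u' -> P u u' -> P (Mu r (Cmd a u)) (Mu r (Cmd a u')))
  (Hs : forall u u', step R Rc u u' -> P u u' -> P (Suc u) (Suc u'))
  (Hn1 : forall r a a' b u, step R Rc a a' -> P a a' -> P (Nrec r a b u) (Nrec r a' b u))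
  (Hn2 : forall r a b b' u, step R Rc b b' -> P b b' -> P (Nrec r a b u) (Nrec r a b' u))
  (Hn3 : forall r a b u u', step R Rc u u' -> P u u' -> P (Nrec r a b u) (Nrec r a b u')) :
  forall t t', step R Rc t t' -> P t t'.
Proof.
  intros t t' H.
  apply (step_min R Rc P (fun c c' => forall r, P (Mu r c) (Mu r c'))); auto.
  - intros [a u] c' Hc r. auto.
Qed.

Inductive star (R : term -> term -> Prop) : term -> term -> Prop :=
| star_refl : forall x, star R x x
| star_step : forall x y z, R x y -> star R y z -> star R x z.

Lemma star_one (R : term -> term -> Prop) x y : R x y -> star R x y.
Proof. intros; econstructor; eauto; constructor. Qed.

Lemma star_trans (R : term -> term -> Prop) x y z : star R x y -> star R y z -> star R x z.
Proof. induction 1; intros; eauto using star. Qed.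

Lemma star_cong (R : term -> term -> Prop) (g : term -> term) :
  (forall x y, R x y -> R (g x) (g y)) -> forall x y, star R x y -> star R (g x) (g y).
Proof. intros Hg x y H; induction H; eauto using star. Qed.

Lemma star_incl (R R' : term -> term -> Prop) :
  (forall x y, R x y -> R' x y) -> forall x y, star R x y -> star R' x y.
Proof. intros Hg x y H; induction H; eauto using star. Qed.

Lemma step_plug R Rc E x y : step R Rc x y -> step R Rc (plug E x) (plug E y).
Proof. intros H; induction E; simpl; [auto|apply st_appl|apply st_suc|apply st_nrec3]; auto. Qed.

Notation ABstar := (star redAB).
Notation Bstar := (star redB).
Notation Astar := (star redA).

Lemma A_AB x y : redA x y -> ABstar x y.
Proof. intros; apply star_one; left; auto. Qed.
Lemma B_AB x y : redB x y -> ABstar x y.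
Proof. intros; apply star_one; right; auto. Qed.
Lemma As_ABs x y : Astar x y -> ABstar x y.
Proof. apply star_incl. intros; left; auto. Qed.
Lemma Bs_ABs x y : Bstar x y -> ABstar x y.
Proof. apply star_incl. intros; right; auto. Qed.

Ltac cong_step g :=
  apply (star_cong _ g); [ intros ?x ?y ?H;
    first [ destruct H as [H|H]; [left|right]; eauto using step, cstep
          | eauto using step, cstep ] | ].

Ltac cong_plug E :=
  apply (star_cong _ (plug E)); [ intros ?x ?y ?H;
    first [ destruct H as [H|H]; [left|right]; apply step_plug; auto
          | apply step_plug; auto ] | ].

Lemma invA_Lam r u v : redA (Lam r u) v -> exists u', redA u u' /\ v = Lam r u'.
Proof. intros H; inversion H; subst; eauto.
  match goal with h : ruleA _ _ |- _ => inversion h end. Qed.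

Lemma invA_Mu r a u v : redA (Mu r (Cmd a u)) v -> exists u', redA u u' /\ v = Mu r (Cmd a u').
Proof.
  intros H; inversion H; subst.
  - match goal with h : ruleA _ _ |- _ => inversion h end.
  - match goal with h : cstep _ _ _ _ |- _ => inversion h; subst end.
    + match goal with h : ruleA_c _ _ |- _ => inversion h end.
    + eauto.
Qed.

Lemma invA_App x y v : redA (App x y) v ->
  ruleA (App x y) v \/ (exists x', redA x x' /\ v = App x' y) \/ (exists y', redA y y' /\ v = App x y').
Proof. intros H; inversion H; subst; eauto. Qed.

Lemma invA_Suc x v : redA (Suc x) v -> ruleA (Suc x) v \/ (exists x', redA x x' /\ v = Suc x').
Proof. intros H; inversion H; subst; eauto. Qed.

Lemma invA_Nrec p a b x v : redA (Nrec p a b x) v ->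
  ruleA (Nrec p a b x) v \/ (exists a', redA a a' /\ v = Nrec p a' b x)
  \/ (exists b', redA b b' /\ v = Nrec p a b' x) \/ (exists x', redA x x' /\ v = Nrec p a b x').
Proof. intros H; inversion H; subst; eauto 7. Qed.

Lemma invA_Var x v : redA (Var x) v -> False.
Proof. intros H; inversion H; subst.
  match goal with h : ruleA _ _ |- _ => inversion h end. Qed.
Lemma invA_Zero v : redA Zero v -> False.
Proof. intros H; inversion H; subst.
  match goal with h : ruleA _ _ |- _ => inversion h end. Qed.

Lemma invB_Lam x r b : redB x (Lam r b) ->
  (exists q, x = Mu q (Cmd 0 (lift_mu 0 (Lam r b)))) \/ (exists b0, x = Lam r b0 /\ redB b0 b).
Proof.
  intros H; inversion H; subst; eauto.
  match goal with h : ruleB _ _ |- _ => apply eta_inv in h; destruct h as [q [y [-> ->]]] end. eauto.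
Qed.

Lemma invB_Mu x r c : redB x (Mu r c) ->
  (exists q, x = Mu q (Cmd 0 (lift_mu 0 (Mu r c)))) \/
  (exists c0, x = Mu r c0 /\ cstep ruleB ruleB_c c0 c).
Proof.
  intros H; inversion H; subst; eauto.
  match goal with h : ruleB _ _ |- _ => apply eta_inv in h; destruct h as [q [y [-> ->]]] end. eauto.
Qed.

Lemma invB_Zero x : redB x Zero -> exists q, x = Mu q (Cmd 0 (lift_mu 0 Zero)).
Proof.
  intros H; inversion H; subst; eauto.
  match goal with h : ruleB _ _ |- _ => apply eta_inv in h; destruct h as [q [y [-> ->]]] end. eauto.
Qed.

Lemma invB_Suc x y : redB x (Suc y) ->
  (exists q, x = Mu q (Cmd 0 (lift_mu 0 (Suc y)))) \/ (exists x0, x = Suc x0 /\ redB x0 y).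
Proof.
  intros H; inversion H; subst; eauto.
  match goal with h : ruleB _ _ |- _ => apply eta_inv in h; destruct h as [q [z [-> ->]]] end. eauto.
Qed.

Lemma invB_Mu_src r a u v : redB (Mu r (Cmd a u)) v ->
  (exists x, a = 0 /\ u = lift_mu 0 x /\ v = x) \/
  (exists q c, u = Mu q c /\ v = Mu r (msub_c (sig_rename a) c)) \/
  (exists u', redB u u' /\ v = Mu r (Cmd a u')).
Proof.
  intros H; inversion H; subst.
  - match goal with h : ruleB _ _ |- _ => apply eta_inv in h; destruct h as [q [z [E ->]]] end.
    injection E; intros; subst. eauto.
  - match goal with h : cstep _ _ _ _ |- _ => inversion h; subst end.
    + match goal with h : ruleB_c _ _ |- _ => inversion h; subst end. right; left; eauto.
    + eauto.
Qed.

Ltac cong g :=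
  apply (star_cong _ g); [ let Hn := fresh "Hn" in intros ? ? Hn; unfold redAB, redA, redB in Hn |- *;
    first [ destruct Hn as [Hn|Hn]; [left|right]; eauto 7 using step, cstep, step_plug
          | eauto 7 using step, cstep, step_plug ] | ].

Lemma rename_comp_eq f a :
  comp (rn (upf f)) (rn (renf a)) = comp (rn (renf (upf f a))) (rn (upf (upf f))).
Proof. apply functional_extensionality; intros [|i]; reflexivity. Qed.

Lemma BR t t' : redB t t' -> forall f, redB (msub (rn f) t) (msub (rn f) t').
Proof.
  intros HH; pattern t, t'; eapply (step_ind' ruleB ruleB_c); [ .. | exact HH]; clear HH t t'; unfold redB in *; intros; simpl; rewrite ?up_lam_rn, ?up_mu_rn; simpl;
    eauto using step, cstep.
  - apply eta_inv in H. destruct H as [r [x [-> ->]]]. simpl. rewrite up_mu_rn. simpl.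
    rewrite upf_lift. apply st_base, eta_intro.
  - inversion H; subst. simpl. rewrite up_mu_rn. simpl.
    apply st_mu, cst_base.
    rewrite sig_rename_rn, !msub_comp_c, rename_comp_eq, <- !msub_comp_c, <- sig_rename_rn.
    apply rB_mumu.
Qed.

Lemma LLrn_c c f k : lift_lam_c k (msub_c (rn f) c) = msub_c (rn f) (lift_lam_c k c).
Proof. destruct c; simpl. rewrite LLrn. reflexivity. Qed.

Lemma BL t t' : redB t t' -> forall k, redB (lift_lam k t) (lift_lam k t').
Proof.
  intros HH; pattern t, t'; eapply (step_ind' ruleB ruleB_c); [ .. | exact HH]; clear HH t t'; unfold redB in *; intros; simpl; eauto using step, cstep.
  - apply eta_inv in H. destruct H as [r [x [-> ->]]]. simpl. rewrite L2.
    apply st_base, eta_intro.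
  - inversion H; subst. simpl. apply st_mu, cst_base.
    rewrite sig_rename_rn, LLrn_c, <- sig_rename_rn. apply rB_mumu.
Qed.

Lemma MSc c f k r : msub_c (rn f) (subst_c k r c) = subst_c k (msub (rn f) r) (msub_c (rn f) c).
Proof. destruct c; simpl. rewrite MS. reflexivity. Qed.

Lemma BS t t' : redB t t' -> forall k r, redB (subst k r t) (subst k r t').
Proof.
  intros HH; pattern t, t'; eapply (step_ind' ruleB ruleB_c); [ .. | exact HH]; clear HH t t'; unfold redB in *; intros; simpl; eauto using step, cstep.
  - apply eta_inv in H. destruct H as [q [x [-> ->]]]. simpl.
    rewrite !lift0, <- MS, <- lift0. apply st_base, eta_intro.
  - inversion H; subst. simpl. apply st_mu, cst_base.
    replace (subst_c k (lift_mu 0 r0) (msub_c (sig_rename a) c))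
      with (msub_c (sig_rename a) (subst_c k (lift_mu 0 (lift_mu 0 r0)) c)).
    apply rB_mumu.
    rewrite sig_rename_rn, MSc, <- sig_rename_rn, rename_lift. reflexivity.
Qed.

Lemma BR_star x y f : Bstar x y -> Bstar (msub (rn f) x) (msub (rn f) y).
Proof. apply (star_cong _ (msub (rn f))). intros; apply BR; auto. Qed.
Lemma BL_star x y k : Bstar x y -> Bstar (lift_lam k x) (lift_lam k y).
Proof. apply (star_cong _ (lift_lam k)). intros; apply BL; auto. Qed.

Lemma BSR t : forall k r r', redB r r' -> Bstar (subst k r t) (subst k r' t).
Proof.
  induction t using term_ind'; intros k r0 r0' H; simpl.
  - destruct (x =? k). apply star_one; auto. apply star_refl.
  - cong (Lam r). apply IHt. apply BL. auto.
  - eapply star_trans. cong (fun x => App x (subst k r0 t2)). eauto.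
    cong (fun x => App (subst k r0' t1) x). eauto.
  - cong (fun x => Mu r (Cmd a x)). apply IHt. rewrite !lift0. apply BR. auto.
  - apply star_refl.
  - cong Suc. eauto.
  - eapply star_trans. cong (fun x => Nrec r x (subst k r0 t2) (subst k r0 t3)). eauto.
    eapply star_trans. cong (fun x => Nrec r (subst k r0' t1) x (subst k r0 t3)). eauto.
    cong (fun x => Nrec r (subst k r0' t1) (subst k r0' t2) x). eauto.
Qed.

Inductive ctx_rel : ctx -> ctx -> Prop :=
| cr_hole : ctx_rel Hole Hole
| cr_app : forall E E' t t', ctx_rel E E' -> Bstar t t' -> ctx_rel (CApp E t) (CApp E' t')
| cr_suc : forall E E', ctx_rel E E' -> ctx_rel (CSuc E) (CSuc E')
| cr_nrec : forall r a a' b b' E E', ctx_rel E E' -> Bstar a a' -> Bstar b b' ->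
    ctx_rel (CNrec r a b E) (CNrec r a' b' E').

Lemma ctx_rel_refl E : ctx_rel E E.
Proof. induction E; constructor; auto; apply star_refl. Qed.

Lemma ctx_rel_plug E E' u u' : ctx_rel E E' -> Bstar u u' -> Bstar (plug E u) (plug E' u').
Proof.
  intros H Hu; induction H; simpl; auto.
  - eapply star_trans. cong (fun x => App x t). eauto. cong (fun x => App (plug E' u') x). auto.
  - cong Suc. auto.
  - eapply star_trans. cong (fun x => Nrec r x b (plug E u)). eauto.
    eapply star_trans. cong (fun x => Nrec r a' x (plug E u)). eauto.
    cong (fun x => Nrec r a' b' x). auto.
Qed.

Lemma ctx_rel_lam E E' : ctx_rel E E' -> ctx_rel (lift_lam_ctx 0 E) (lift_lam_ctx 0 E').
Proof. induction 1; simpl; constructor; auto; apply BL_star; auto. Qed.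
Lemma ctx_rel_mu E E' : ctx_rel E E' -> ctx_rel (lift_mu_ctx 0 E) (lift_mu_ctx 0 E').
Proof. induction 1; simpl; constructor; auto; rewrite !lift0; apply BR_star; auto. Qed.

Definition sig_rel (s s' : msig) : Prop :=
  forall i, fst (s i) = fst (s' i) /\ ctx_rel (snd (s i)) (snd (s' i)).

Lemma sig_rel_up_lam s s' : sig_rel s s' -> sig_rel (up_lam s) (up_lam s').
Proof.
  intros H i. unfold up_lam. specialize (H i). destruct (s i), (s' i). simpl in *.
  destruct H; split; auto. apply ctx_rel_lam; auto.
Qed.
Lemma sig_rel_up_mu s s' : sig_rel s s' -> sig_rel (up_mu s) (up_mu s').
Proof.
  intros H [|i]; simpl. split; auto; constructor.
  specialize (H i). destruct (s i), (s' i). simpl in *.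
  destruct H; split; auto. apply ctx_rel_mu; auto.
Qed.

Lemma BP t : forall s s', sig_rel s s' -> Bstar (msub s t) (msub s' t).
Proof.
  induction t using term_ind'; intros s s' H; simpl.
  - apply star_refl.
  - cong (Lam r). apply IHt. apply sig_rel_up_lam; auto.
  - eapply star_trans. cong (fun x => App x (msub s t2)). eauto.
    cong (fun x => App (msub s' t1) x). eauto.
  - pose proof (sig_rel_up_mu _ _ H) as H'. pose proof (H' a) as Ha.
    destruct (up_mu s a) as [b E], (up_mu s' a) as [b' E']. simpl in Ha. destruct Ha as [-> HE].
    cong (fun x => Mu r (Cmd b' x)). apply ctx_rel_plug; auto.
  - apply star_refl.
  - cong Suc. eauto.
  - eapply star_trans. cong (fun x => Nrec r x (msub s t2) (msub s t3)). eauto.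
    eapply star_trans. cong (fun x => Nrec r (msub s' t1) x (msub s t3)). eauto.
    cong (fun x => Nrec r (msub s' t1) (msub s' t2) x). eauto.
Qed.

Lemma BPc c q s s' : sig_rel s s' -> Bstar (Mu q (msub_c s c)) (Mu q (msub_c s' c)).
Proof.
  intros H. destruct c as [a u]. simpl. pose proof (H a) as Ha.
  destruct (s a) as [b E], (s' a) as [b' E']. simpl in Ha. destruct Ha as [-> HE].
  cong (fun x => Mu q (Cmd b' x)). apply ctx_rel_plug; auto. apply BP; auto.
Qed.

Lemma sig_rel_self E E' : ctx_rel E E' -> sig_rel (sig_self E) (sig_self E').
Proof. intros H [|i]; simpl; split; auto. constructor. Qed.

Lemma SSL x E : msub (sig_self E) (lift_mu 0 x) = lift_mu 0 x.
Proof. rewrite lift0, msub_rn_r. reflexivity. Qed.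
Lemma SSL_ctx F E : msub_ctx (sig_self E) (lift_mu_ctx 0 F) = lift_mu_ctx 0 F.
Proof. induction F; simpl; rewrite ?SSL; congruence. Qed.

Lemma rename_lift_ctx F a : msub_ctx (sig_rename a) (lift_mu_ctx 0 F) = F.
Proof. induction F; simpl; rewrite ?rename_lift; congruence. Qed.

Lemma sig_self_Hole : sig_self Hole = rn (fun i => i).
Proof. apply functional_extensionality; intros [|]; reflexivity. Qed.

Lemma msub_id_c c : msub_c (rn (fun i => i)) c = c.
Proof. destruct c; simpl; rewrite msub_id; reflexivity. Qed.

Lemma msub_ctx_rn_r F s f : msub_ctx s (msub_ctx (rn f) F) = msub_ctx (fun i => s (f i)) F.
Proof. induction F; simpl; rewrite ?msub_rn_r; congruence. Qed.
Lemma msub_ctx_id' F : msub_ctx (fun i => (i, Hole)) F = F.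
Proof. induction F; simpl; rewrite ?(msub_id : forall t, msub (fun i => (i, Hole)) t = t); congruence. Qed.

Lemma SSCOMP F E c :
  msub_c (sig_self F) (msub_c (sig_self (lift_mu_ctx 0 E)) c)
  = msub_c (sig_self (ctx_comp F (lift_mu_ctx 0 E))) c.
Proof.
  rewrite msub_comp_c. apply msub_c_ext.
  apply functional_extensionality; intros [|i]; unfold comp; simpl.
  - rewrite SSL_ctx. reflexivity.
  - reflexivity.
Qed.

Lemma PUSH E : forall r c, exists r',
  Astar (plug E (Mu r c)) (Mu r' (msub_c (sig_self (lift_mu_ctx 0 E)) c)).
Proof.
  induction E; intros r0 c; simpl.
  - exists r0. rewrite sig_self_Hole, msub_id_c. apply star_refl.
  - destruct (IHE r0 c) as [r' H]. exists (cod r').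
    eapply star_trans. cong (fun x => App x t). exact H.
    apply star_one. unfold redA. apply st_base.
    replace (msub_c (sig_self (CApp (lift_mu_ctx 0 E) (lift_mu 0 t))) c)
      with (msub_c (sig_self (CApp Hole (lift_mu 0 t))) (msub_c (sig_self (lift_mu_ctx 0 E)) c))
      by (rewrite SSCOMP; reflexivity).
    apply rA_app_mu.
  - destruct (IHE r0 c) as [r' H]. exists r'.
    eapply star_trans. cong Suc. exact H.
    apply star_one. unfold redA. apply st_base.
    replace (msub_c (sig_self (CSuc (lift_mu_ctx 0 E))) c)
      with (msub_c (sig_self (CSuc Hole)) (msub_c (sig_self (lift_mu_ctx 0 E)) c))
      by (rewrite SSCOMP; reflexivity).
    apply rA_suc_mu.
  - destruct (IHE r0 c) as [r' H]. exists t.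
    eapply star_trans. cong (fun x => Nrec t t0 t1 x). exact H.
    apply star_one. unfold redA. apply st_base.
    replace (msub_c (sig_self (CNrec t (lift_mu 0 t0) (lift_mu 0 t1) (lift_mu_ctx 0 E))) c)
      with (msub_c (sig_self (CNrec t (lift_mu 0 t0) (lift_mu 0 t1) Hole)) (msub_c (sig_self (lift_mu_ctx 0 E)) c))
      by (rewrite SSCOMP; reflexivity).
    apply rA_nrec_mu.
Qed.

Lemma MUMU_gen s a q c r :
  ABstar (Mu r (msub_c s (Cmd a (Mu q c)))) (Mu r (msub_c s (msub_c (sig_rename a) c))).
Proof.
  simpl. remember (s a) as p eqn:Ha. destruct p as [b E].
  destruct (PUSH E q (msub_c (up_mu s) c)) as [r' HP].
  eapply star_trans. cong (fun x => Mu r (Cmd b x)). apply As_ABs. exact HP.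
  apply B_AB. unfold redB. apply st_mu, cst_base.
  replace (msub_c s (msub_c (sig_rename a) c))
    with (msub_c (sig_rename b) (msub_c (sig_self (lift_mu_ctx 0 E)) (msub_c (up_mu s) c))).
  apply rB_mumu.
  rewrite !msub_comp_c. apply msub_c_ext.
  apply functional_extensionality; intros [|i]; unfold comp; simpl.
  - rewrite <- Ha. rewrite !ctx_comp_Hole, rename_lift_ctx. reflexivity.
  - destruct (s i) as [j F]. simpl. rewrite (lift0_ctx F), msub_ctx_rn_r. simpl.
    rewrite msub_ctx_id', ctx_comp_Hole. reflexivity.
Qed.

Lemma BM t t' : redB t t' -> forall s, ABstar (msub s t) (msub s t').
Proof.
  intros HH; pattern t, t'; eapply (step_ind' ruleB ruleB_c); [ .. | exact HH]; clear HH t t';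
    intros; simpl.
  - apply eta_inv in H. destruct H as [r [x [-> ->]]]. simpl. rewrite UPL.
    apply B_AB. apply st_base, eta_intro.
  - cong (Lam r). auto.
  - cong (fun x => App x (msub s v)). auto.
  - cong (fun x => App (msub s u) x). auto.
  - inversion H; subst. apply MUMU_gen.
  - destruct (up_mu s a) as [b E]. cong (fun x => Mu r (Cmd b (plug E x))). auto.
  - cong Suc. auto.
  - cong (fun x => Nrec r x (msub s b) (msub s u)). auto.
  - cong (fun x => Nrec r (msub s a) x (msub s u)). auto.
  - cong (fun x => Nrec r (msub s a) (msub s b) x). auto.
Qed.

Lemma BMc c c' : cstep ruleB ruleB_c c c' -> forall s q, ABstar (Mu q (msub_c s c)) (Mu q (msub_c s c')).
Proof.
  intros H s q. inversion H; subst.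
  - inversion H0; subst. apply MUMU_gen.
  - simpl. destruct (s a) as [b E]. cong (fun x => Mu q (Cmd b (plug E x))). apply BM. auto.
Qed.

Lemma ARmu f E c :
  msub_c (rn (upf f)) (msub_c (sig_self E) c)
  = msub_c (sig_self (msub_ctx (rn (upf f)) E)) (msub_c (rn (upf f)) c).
Proof.
  rewrite !msub_comp_c. apply msub_c_ext.
  apply functional_extensionality; intros [|i]; unfold comp; simpl; auto.
  rewrite ctx_comp_Hole. reflexivity.
Qed.

Lemma AR t t' : redA t t' -> forall f, redA (msub (rn f) t) (msub (rn f) t').
Proof.
  intros HH; pattern t, t'; eapply (step_ind' ruleA ruleA_c); [ .. | exact HH]; clear HH t t';
    unfold redA in *; intros; simpl; rewrite ?up_lam_rn, ?up_mu_rn; simpl;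
    eauto using step, cstep.
  - apply st_base. inversion H; subst; simpl; rewrite ?up_lam_rn, ?up_mu_rn.
    + rewrite MS. apply rA_beta.
    + rewrite ARmu. apply rA_suc_mu.
    + rewrite ARmu. simpl. rewrite upf_lift. apply rA_app_mu.
    + apply rA_nrec_0.
    + rewrite msub_numeral. apply rA_nrec_S.
    + rewrite ARmu. simpl. rewrite !upf_lift. apply rA_nrec_mu.
  - inversion H.
Qed.

Lemma ARF t : forall f v, redA (msub (rn f) t) v -> exists t', redA t t' /\ v = msub (rn f) t'.
Proof.
  induction t using term_ind'; intros f v H; simpl in H.
  - exfalso; eapply invA_Var; eauto.
  - rewrite up_lam_rn in H. apply invA_Lam in H as [u' [Hu ->]].
    destruct (IHt _ _ Hu) as [t1 [Ht1 ->]]. exists (Lam r t1). split.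
    apply st_lam; auto. simpl; rewrite up_lam_rn; auto.
  - apply invA_App in H as [Hr | [[x' [Hx ->]] | [y' [Hy ->]]]].
    + destruct t1; simpl in Hr; inversion Hr; subst.
      * exists (subst 0 t2 t1). split. apply st_base, rA_beta.
        rewrite MS, up_lam_rn. reflexivity.
      * exists (Mu (cod t) (msub_c (sig_self (CApp Hole (lift_mu 0 t2))) c)). split.
        apply st_base, rA_app_mu.
        simpl. rewrite up_mu_rn, ARmu. simpl. rewrite upf_lift. reflexivity.
    + destruct (IHt1 _ _ Hx) as [t1' [H1 ->]]. exists (App t1' t2). split.
      apply st_appl; auto. reflexivity.
    + destruct (IHt2 _ _ Hy) as [t2' [H2 ->]]. exists (App t1 t2'). split.
      apply st_appr; auto. reflexivity.
  - rewrite up_mu_rn in H. simpl in H. apply invA_Mu in H as [u' [Hu ->]].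
    destruct (IHt _ _ Hu) as [t1 [Ht1 ->]]. exists (Mu r (Cmd a t1)). split.
    apply st_mu, cst_cmd; auto. simpl; rewrite up_mu_rn; auto.
  - exfalso; eapply invA_Zero; eauto.
  - apply invA_Suc in H as [Hr | [x' [Hx ->]]].
    + destruct t; simpl in Hr; inversion Hr; subst.
      exists (Mu t (msub_c (sig_self (CSuc Hole)) c)). split.
      apply st_base, rA_suc_mu.
      simpl. rewrite up_mu_rn, ARmu. reflexivity.
    + destruct (IHt _ _ Hx) as [t1 [H1 ->]]. exists (Suc t1). split.
      apply st_suc; auto. reflexivity.
  - apply invA_Nrec in H as [Hr | [[x' [Hx ->]] | [[x' [Hx ->]] | [x' [Hx ->]]]]].
    + destruct t3; simpl in Hr; inversion Hr; subst.
      * exists (Mu r (msub_c (sig_self (CNrec r (lift_mu 0 t1) (lift_mu 0 t2) Hole)) c)). split.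
        apply st_base, rA_nrec_mu.
        simpl. rewrite up_mu_rn, ARmu. simpl. rewrite !upf_lift. reflexivity.
      * exists t1. split. apply st_base, rA_nrec_0. reflexivity.
      * match goal with h : numeral _ = msub _ _ |- _ => symmetry in h; apply msub_rn_numeral in h end.
        subst. exists (App (App t2 (numeral n)) (Nrec r t1 t2 (numeral n))). split.
        apply st_base, rA_nrec_S. simpl. rewrite msub_numeral. reflexivity.
    + destruct (IHt1 _ _ Hx) as [y [Hy ->]]. exists (Nrec r y t2 t3). split.
      apply st_nrec1; auto. reflexivity.
    + destruct (IHt2 _ _ Hx) as [y [Hy ->]]. exists (Nrec r t1 y t3). split.
      apply st_nrec2; auto. reflexivity.
    + destruct (IHt3 _ _ Hx) as [y [Hy ->]]. exists (Nrec r t1 t2 y). split.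
      apply st_nrec3; auto. reflexivity.
Qed.

Lemma FA q x s : redA (App (Mu q (Cmd 0 (lift_mu 0 x))) s) (Mu (cod q) (Cmd 0 (lift_mu 0 (App x s)))).
Proof.
  replace (Mu (cod q) (Cmd 0 (lift_mu 0 (App x s))))
    with (Mu (cod q) (msub_c (sig_self (CApp Hole (lift_mu 0 s))) (Cmd 0 (lift_mu 0 x)))).
  apply st_base, rA_app_mu. simpl. rewrite SSL. reflexivity.
Qed.

Lemma FS q x : redA (Suc (Mu q (Cmd 0 (lift_mu 0 x)))) (Mu q (Cmd 0 (lift_mu 0 (Suc x)))).
Proof.
  replace (Mu q (Cmd 0 (lift_mu 0 (Suc x))))
    with (Mu q (msub_c (sig_self (CSuc Hole)) (Cmd 0 (lift_mu 0 x)))).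
  apply st_base, rA_suc_mu. simpl. rewrite SSL. reflexivity.
Qed.

Lemma FN p a b q x : redA (Nrec p a b (Mu q (Cmd 0 (lift_mu 0 x)))) (Mu p (Cmd 0 (lift_mu 0 (Nrec p a b x)))).
Proof.
  replace (Mu p (Cmd 0 (lift_mu 0 (Nrec p a b x))))
    with (Mu p (msub_c (sig_self (CNrec p (lift_mu 0 a) (lift_mu 0 b) Hole)) (Cmd 0 (lift_mu 0 x)))).
  apply st_base, rA_nrec_mu. simpl. rewrite SSL. reflexivity.
Qed.

Lemma BA w y v : redB w y -> redA y v -> ABstar w v.
Proof. intros H1 H2. eapply star_step. right; exact H1. apply A_AB; auto. Qed.

Lemma eta_step q x : redB (Mu q (Cmd 0 (lift_mu 0 x))) x.
Proof. apply st_base, eta_intro. Qed.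

Lemma NUM n : forall x, redB x (numeral n) -> exists X, redA (Suc x) X /\ redB X (Suc (numeral n)).
Proof.
  induction n; intros x H; simpl in *.
  - apply invB_Zero in H as [q ->]. eexists. split. apply FS. apply eta_step.
  - apply invB_Suc in H as [[q ->] | [x0 [-> H0]]].
    + eexists. split. apply FS. apply eta_step.
    + destruct (IHn _ H0) as [X [HA HB]]. exists (Suc X). split; apply st_suc; auto.
Qed.

Lemma lift_B s s' : redB s s' -> Bstar (lift_mu 0 s) (lift_mu 0 s').
Proof. intros H. rewrite !lift0. apply star_one. apply BR. auto. Qed.

Lemma POST t u : redB t u -> forall v, redA u v -> exists w, redA t w /\ ABstar w v.
Proof.
  intros HH; pattern t, u; eapply (step_ind' ruleB ruleB_c); [ .. | exact HH]; clear HH t u.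
  -
    intros t u Hr v Hv. apply eta_inv in Hr as [r [x [-> ->]]].
    exists (Mu r (Cmd 0 (lift_mu 0 v))). split.
    + apply st_mu, cst_cmd. rewrite !lift0. apply AR. auto.
    + apply B_AB, eta_step.
  - intros r u u' Hb IH v Hv. apply invA_Lam in Hv as [u'' [Hu ->]].
    destruct (IH _ Hu) as [w [Hw Hs]]. exists (Lam r w). split. apply st_lam; auto.
    cong (Lam r). auto.
  - intros u u' s Hb IH v Hv. apply invA_App in Hv as [Hr | [[x' [Hx ->]] | [y' [Hy ->]]]].
    + inversion Hr; subst.
      * apply invB_Lam in Hb as [[q ->] | [b0 [-> Hb0]]].
        -- eexists. split. apply FA. eapply BA. apply eta_step. apply st_base; exact Hr.
        -- eexists. split. apply st_base, rA_beta. apply B_AB. apply BS. auto.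
      * apply invB_Mu in Hb as [[q ->] | [c0 [-> Hc]]].
        -- eexists. split. apply FA. eapply BA. apply eta_step. apply st_base; exact Hr.
        -- eexists. split. apply st_base, rA_app_mu. apply BMc. auto.
    + destruct (IH _ Hx) as [w [Hw Hs]]. exists (App w s). split. apply st_appl; auto.
      cong (fun z => App z s). auto.
    + exists (App u y'). split. apply st_appr; auto. apply B_AB. apply st_appl; auto.
  - intros s u u' Hb IH v Hv. apply invA_App in Hv as [Hr | [[x' [Hx ->]] | [y' [Hy ->]]]].
    + inversion Hr; subst.
      * eexists. split. apply st_base, rA_beta. apply Bs_ABs. apply BSR. auto.
      * eexists. split. apply st_base, rA_app_mu. apply Bs_ABs. apply BPc.
        apply sig_rel_self. constructor. constructor. apply lift_B. auto.
    + exists (App x' u). split. apply st_appl; auto. apply B_AB. apply st_appr; auto.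
    + destruct (IH _ Hy) as [w [Hw Hs]]. exists (App s w). split. apply st_appr; auto.
      cong (fun z => App s z). auto.
  -
    intros r a u c' Hr v Hv. inversion Hr; subst. destruct c as [a0 u0].
    rewrite sig_rename_rn in Hv. simpl in Hv. apply invA_Mu in Hv as [u' [Hu ->]].
    apply ARF in Hu as [u1 [Hu1 ->]].
    exists (Mu r (Cmd a (Mu r0 (Cmd a0 u1)))). split.
    + apply st_mu, cst_cmd, st_mu, cst_cmd. auto.
    + apply B_AB. apply st_mu, cst_base.
      replace (Cmd (renf a a0) (msub (rn (renf a)) u1)) with (msub_c (sig_rename a) (Cmd a0 u1)).
      apply rB_mumu. rewrite sig_rename_rn. reflexivity.
  - intros r a u u' Hb IH v Hv. apply invA_Mu in Hv as [u'' [Hu ->]].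
    destruct (IH _ Hu) as [w [Hw Hs]]. exists (Mu r (Cmd a w)). split. apply st_mu, cst_cmd; auto.
    cong (fun z => Mu r (Cmd a z)). auto.
  - intros u u' Hb IH v Hv. apply invA_Suc in Hv as [Hr | [x' [Hx ->]]].
    + inversion Hr; subst. apply invB_Mu in Hb as [[q ->] | [c0 [-> Hc]]].
      * eexists. split. apply FS. eapply BA. apply eta_step. apply st_base; exact Hr.
      * eexists. split. apply st_base, rA_suc_mu. apply BMc. auto.
    + destruct (IH _ Hx) as [w [Hw Hs]]. exists (Suc w). split. apply st_suc; auto.
      cong Suc. auto.
  - intros p a a' b x Hb IH v Hv.
    apply invA_Nrec in Hv as [Hr | [[x' [Hx ->]] | [[x' [Hx ->]] | [x' [Hx ->]]]]].
    + inversion Hr; subst.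
      * eexists. split. apply st_base, rA_nrec_0. apply B_AB; auto.
      * eexists. split. apply st_base, rA_nrec_S. apply B_AB. apply st_appr, st_nrec1. auto.
      * eexists. split. apply st_base, rA_nrec_mu. apply Bs_ABs. apply BPc.
        apply sig_rel_self. constructor. constructor. apply lift_B; auto. apply star_refl.
    + destruct (IH _ Hx) as [w [Hw Hs]]. exists (Nrec p w b x). split. apply st_nrec1; auto.
      cong (fun z => Nrec p z b x). auto.
    + exists (Nrec p a x' x). split. apply st_nrec2; auto. apply B_AB. apply st_nrec1; auto.
    + exists (Nrec p a b x'). split. apply st_nrec3; auto. apply B_AB. apply st_nrec1; auto.
  - intros p a b b' x Hb IH v Hv.
    apply invA_Nrec in Hv as [Hr | [[x' [Hx ->]] | [[x' [Hx ->]] | [x' [Hx ->]]]]].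
    + inversion Hr; subst.
      * eexists. split. apply st_base, rA_nrec_0. apply star_refl.
      * eexists. split. apply st_base, rA_nrec_S. eapply star_trans.
        apply B_AB. apply st_appl, st_appl. exact Hb.
        apply B_AB. apply st_appr, st_nrec2. exact Hb.
      * eexists. split. apply st_base, rA_nrec_mu. apply Bs_ABs. apply BPc.
        apply sig_rel_self. constructor. constructor. apply star_refl. apply lift_B; auto.
    + exists (Nrec p x' b x). split. apply st_nrec1; auto. apply B_AB. apply st_nrec2; auto.
    + destruct (IH _ Hx) as [w [Hw Hs]]. exists (Nrec p a w x). split. apply st_nrec2; auto.
      cong (fun z => Nrec p a z x). auto.
    + exists (Nrec p a b x'). split. apply st_nrec3; auto. apply B_AB. apply st_nrec2; auto.
  - intros p a b x x0 Hb IH v Hv.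
    apply invA_Nrec in Hv as [Hr | [[x' [Hx ->]] | [[x' [Hx ->]] | [x' [Hx ->]]]]].
    + inversion Hr; subst.
      * apply invB_Zero in Hb as [q ->].
        eexists. split. apply FN. eapply BA. apply eta_step. apply st_base; exact Hr.
      * apply invB_Suc in Hb as [[q ->] | [y0 [-> Hy0]]].
        -- eexists. split. apply FN. eapply BA. apply eta_step. apply st_base; exact Hr.
        -- destruct (NUM _ _ Hy0) as [X [HA HB]].
           exists (Nrec p a b X). split. apply st_nrec3; auto.
           eapply BA. apply st_nrec3. exact HB. apply st_base; exact Hr.
      * apply invB_Mu in Hb as [[q1 ->] | [c0 [-> Hc]]].
        -- eexists. split. apply FN. eapply BA. apply eta_step. apply st_base; exact Hr.
        -- eexists. split. apply st_base, rA_nrec_mu. apply BMc. auto.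
    + exists (Nrec p x' b x). split. apply st_nrec1; auto. apply B_AB. apply st_nrec3; auto.
    + exists (Nrec p a x' x). split. apply st_nrec2; auto. apply B_AB. apply st_nrec3; auto.
    + destruct (IH _ Hx) as [w [Hw Hs]]. exists (Nrec p a b w). split. apply st_nrec3; auto.
      cong (fun z => Nrec p a b z). auto.
Qed.

Lemma POSTstar t u : Bstar t u -> forall v, redA u v -> exists w, redA t w /\ ABstar w v.
Proof.
  induction 1; intros v Hv.
  - exists v. split; auto. apply star_refl.
  - destruct (IHstar v Hv) as [w1 [H1 H2]].
    destruct (POST _ _ H w1 H1) as [w [H3 H4]].
    exists w. split; auto. eapply star_trans; eauto.
Qed.

Lemma size_B t t' : redB t t' -> size t' < size t.
Proof.
  intros HH; pattern t, t'; eapply (step_ind' ruleB ruleB_c); [ .. | exact HH]; clear HH t t';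
    intros; simpl; try lia.
  - apply eta_inv in H as [r [x [-> ->]]]. simpl. rewrite lift0, size_rn. lia.
  - inversion H; subst. destruct c as [a0 u0]. rewrite sig_rename_rn. simpl.
    rewrite size_rn. lia.
Qed.

Lemma SN_star R t t' : SN R t -> star R t t' -> SN R t'.
Proof.
  intros HS H. induction H; auto. apply IHstar. destruct HS as [t Ht]. auto.
Qed.

Lemma main_aux t : SN redA t -> forall u, Bstar t u -> SN redAB u.
Proof.
  intros H; induction H as [t _ IH].
  intros u. remember (size u) as n eqn:Hn. revert u Hn.
  induction n as [n IHn] using lt_wf_ind. intros u Hn Hu.
  constructor. intros u' [HA|HB].
  - destruct (POSTstar _ _ Hu _ HA) as [w [Hw Hs]].
    eapply SN_star; [|exact Hs]. apply (IH w Hw w). apply star_refl.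
  - apply (IHn (size u')). subst. apply size_B; auto. reflexivity.
    eapply star_trans. exact Hu. apply star_one. exact HB.
Qed.

Theorem mainTheorem17 : forall t : term, SN redA t -> SN redAB t.
Proof. intros t H. apply (main_aux t H t). apply star_refl. Qed.
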